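(* The Banach spaces $ces_\infty$ and $\ell_\infty$ are not isomorphic.
   Context: $ces_\infty$ is the space of real sequences $a=(a_n)_{n\ge1}$ with $\|a\|=\sup_{n\ge1}\frac1n\sum_{k=1}^n|a_k|<\infty$. ''Isomorphic'' means linearly isomorphic as Banach spaces. *)

(* Defs.v *)
From HB Require Import structures.
From mathcomp Require Import all_boot all_order all_algebra.
From mathcomp Require Import all_classical all_reals.
Set Implicit Arguments. Unset Strict Implicit. Unset Printing Implicit Defensive.
Import Order.TTheory GRing.Theory Num.Theory.
Local Open Scope ring_scope.
Local Open Scope classical_set_scope.

(* Sequences are indexed from 0: a 0 corresponds to a_1 in the paper. *)

Definition ces_avg (R : realType) (a : nat -> R) (n : nat) : R :=
  (n.+1%:R)^-1 * \sum_(k < n.+1) `|a k|.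

Definition in_ces_infty (R : realType) (a : nat -> R) : Prop :=
  exists M : R, forall n, ces_avg a n <= M.

Definition ces_norm (R : realType) (a : nat -> R) : R :=
  sup (range (ces_avg a)).

Definition in_l_infty (R : realType) (a : nat -> R) : Prop :=
  exists M : R, forall n, `|a n| <= M.

Definition linf_norm (R : realType) (a : nat -> R) : R :=
  sup (range (fun n => `|a n|)).

(* T (defined on all sequences, only its restriction to ces_infty matters)
   is a linear isomorphism of Banach spaces from ces_infty onto l_infty:
   linear, bijective, bounded with bounded inverse. *)
Definition ces_linf_isomorphism (R : realType) (T : (nat -> R) -> (nat -> R))
  : Prop :=
  (forall a, in_ces_infty a -> in_l_infty (T a)) /\
      (forall a b, in_ces_infty a -> in_ces_infty b ->
          T (fun n => a n + b n) = (fun n => T a n + T b n)) /\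
      (forall (r : R) a, in_ces_infty a ->
          T (fun n => r * a n) = (fun n => r * T a n)) /\
      (forall a b, in_ces_infty a -> in_ces_infty b -> T a = T b -> a = b) /\
      (forall y, in_l_infty y -> exists2 a, in_ces_infty a & T a = y) /\
    (exists c C : R, 0 < c /\ 0 < C /\
        forall a, in_ces_infty a ->
          c * ces_norm a <= linf_norm (T a) /\ linf_norm (T a) <= C * ces_norm a).

(* Main.v *)
Require Import Defs.
From mathcomp Require Import all_boot all_order all_algebra.
From mathcomp Require Import all_classical all_reals.
From mathcomp Require Import ring lra.
Import Order.TTheory GRing.Theory Num.Theory.
Local Open Scope ring_scope.

Section Khin.
Variable R : realType.

Definition ext (e : nat -> R) (n : nat) (s : R) : nat -> R :=
  fun i => if i == n then s else e i.

Fixpoint signs (n : nat) : seq (nat -> R) :=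
  if n is n'.+1 then [seq ext e n' 1 | e <- signs n'] ++ [seq ext e n' (-1) | e <- signs n']
  else [:: fun _ => 1].

Lemma sum_signsS n (F : (nat -> R) -> R) :
  \sum_(e <- signs n.+1) F e = \sum_(e <- signs n) (F (ext e n 1) + F (ext e n (-1))).
Proof. by rewrite /= big_cat !big_map big_split. Qed.

Lemma sum_signs_const n (c : R) : \sum_(e <- signs n) c = 2 ^+ n * c.
Proof.
elim: n => [|n IH]; first by rewrite /= big_seq1 expr0 mul1r.
by rewrite sum_signsS big_split /= IH exprS; ring.
Qed.

Lemma sum_signs_le n (F : (nat -> R) -> R) K :
  (forall e, (forall i, `|e i| <= 1) -> F e <= K) ->
  \sum_(e <- signs n) F e <= 2 ^+ n * K.
Proof.
elim: n F => [|n IH] F hF.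
  by rewrite /= big_seq1 expr0 mul1r; apply: hF => i; rewrite normr1.
rewrite sum_signsS big_split /= exprS.
have h1 := IH (fun e => F (ext e n 1)).
have h2 := IH (fun e => F (ext e n (-1))).
have e1 : forall s : R, `|s| <= 1 -> forall e : nat -> R, (forall i, `|e i| <= 1) ->
   forall i, `|ext e n s i| <= 1.
  by move=> s hs e he i; rewrite /ext; case: (i == n).
have := h1 (fun e he => hF _ (e1 1 ltac:(by rewrite normr1) e he)).
have := h2 (fun e he => hF _ (e1 (-1) ltac:(by rewrite normrN normr1) e he)).
move=> a b; lra.
Qed.

Definition S (n : nat) (a : nat -> R) (e : nat -> R) := \sum_(i < n) e i * a i.

Lemma S_ext n a e s : S n.+1 a (ext e n s) = S n a e + s * a n.
Proof.
rewrite /S big_ord_recr /= /ext eqxx; congr (_ + _).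
by apply: eq_bigr => i _; rewrite /= (ltn_eqF (ltn_ord i)).
Qed.

Lemma S0 a e : S 0 a e = 0.
Proof. by rewrite /S big_ord0. Qed.

Definition q2 n (a : nat -> R) := \sum_(i < n) a i ^+ 2.

Lemma q2_ge0 n a : 0 <= q2 n a.
Proof. by apply: sumr_ge0 => i _; exact: sqr_ge0. Qed.

Lemma M2 n a : \sum_(e <- signs n) S n a e ^+ 2 = 2 ^+ n * q2 n a.
Proof.
elim: n => [|n IH]; first by rewrite /= big_seq1 S0 /q2 big_ord0; ring.
rewrite sum_signsS.
under eq_bigr => e _ do rewrite !S_ext.
rewrite /q2 big_ord_recr /= -/(q2 n a).
rewrite (eq_bigr (fun e : nat -> R => 2 * S n a e ^+ 2 + 2 * a n ^+ 2)); last by move=> e _; ring.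
rewrite big_split /= -mulr_sumr IH sum_signs_const [(2:R) ^+ n.+1]exprS; ring.
Qed.

Lemma M4 n a : \sum_(e <- signs n) S n a e ^+ 4 <= 3 * 2 ^+ n * q2 n a ^+ 2.
Proof.
elim: n => [|n IH]; first by rewrite /= big_seq1 S0 /q2 big_ord0; lra.
rewrite sum_signsS.
under eq_bigr => e _ do rewrite !S_ext.
rewrite (eq_bigr (fun e : nat -> R => 2 * S n a e ^+ 4 + 12 * a n ^+ 2 * S n a e ^+ 2 + 2 * a n ^+ 4)); last by move=> e _; ring.
rewrite !big_split /= -!mulr_sumr M2 sum_signs_const.
rewrite /q2 big_ord_recr /= -/(q2 n a).
have hq := q2_ge0 n a. have hP : 0 <= (2:R) ^+ n by rewrite exprn_ge0.
have ha : 0 <= a n ^+ 2 := sqr_ge0 _.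
rewrite [(2:R) ^+ n.+1]exprS.
set P := (2:R) ^+ n in IH hP *. set q := q2 n a in IH hq *. set b := a n ^+ 2 in ha *.
have e4 : a n * (a n * (a n * (P * a n))) = P * b ^+ 2 by rewrite /b; ring.
rewrite e4.
have h1 : 0 <= P * q * b by apply: mulr_ge0 => //; apply: mulr_ge0.
have h2 : 0 <= P * b ^+ 2 by apply: mulr_ge0 => //; apply: sqr_ge0.
nra.
Qed.

Lemma pt_bound (l s : R) : 0 <= l -> (3 * l * s ^+ 2 - l ^+ 3 * s ^+ 4) / 2 <= `|s|.
Proof. move=> hl.
have -> : s ^+ 4 = (`|s| ^+2) ^+ 2 by rewrite -normrX real_normK ?num_real // -exprM.
rewrite -real_normK ?num_real //.
have h:= normr_ge0 s. move: h; set u := `|s| => h.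
have h1 : 0 <= ((l * u) - 1)^+2 := sqr_ge0 _.
have h2 : 0 <= l * u + 2 by nra.
have : 0 <= u * ((l * u) - 1)^+2 * (l * u + 2) by apply: mulr_ge0 => //; apply: mulr_ge0.
nra. Qed.

Definition p1 n (a : nat -> R) := \sum_(i < n) `|a i|.

Lemma CS n a : p1 n a ^+ 2 <= n%:R * q2 n a.
Proof.
elim: n => [|n IH]; first by rewrite /p1 /q2 !big_ord0; lra.
rewrite /p1 /q2 !big_ord_recr /= -/(p1 n a) -/(q2 n a).
have hp : 0 <= p1 n a by apply: sumr_ge0 => i _.
have hq := q2_ge0 n a.
rewrite -(real_normK (num_real (a n))).
have hx := normr_ge0 (a n). move: hx; set x := `|a n| => hx.
set p := p1 n a in IH hp *. set q := q2 n a in IH hq *.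
have hn : 0 <= (n%:R : R) by [].
have h0 : 0 <= (q - n%:R * x ^+ 2) ^+ 2 := sqr_ge0 _.
have h3 : 2 * p * x <= q + n%:R * x ^+ 2.
  have h4 : (2 * p * x) ^+ 2 <= (q + n%:R * x ^+ 2) ^+ 2.
    have : p ^+ 2 * x ^+ 2 <= n%:R * q * x ^+2 by rewrite ler_wpM2r ?sqr_ge0.
    nra.
  have h5 : 0 <= q + n%:R * x ^+ 2 by rewrite addr_ge0 ?mulr_ge0 ?sqr_ge0.
  nra.
rewrite -natr1. nra.
Qed.

Lemma khin n a : 2 ^+ n * p1 n a <= Num.sqrt (3 * n%:R) * \sum_(e <- signs n) `|S n a e|.
Proof.
have hq := q2_ge0 n a. have hP : 0 < (2:R) ^+ n by rewrite exprn_gt0.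
have hcs := CS n a.
have hp : 0 <= p1 n a by apply: sumr_ge0 => i _.
have hD := sqrtr_ge0 (3 * n%:R : R).
have hsum : 0 <= \sum_(e <- signs n) `|S n a e| by apply: sumr_ge0 => e _.
case: (ltrP 0 (q2 n a)) => hq0; last first.
  have hqe : q2 n a = 0 by apply/eqP; rewrite eq_le hq0 hq.
  rewrite hqe mulr0 in hcs.
  have : p1 n a = 0 by nra.
  move=> ->; rewrite mulr0; exact: mulr_ge0.
set r := Num.sqrt (3 * q2 n a).
have hr : 0 < r by rewrite sqrtr_gt0; lra.
have hr2 : r ^+ 2 = 3 * q2 n a by rewrite sqr_sqrtr //; lra.
set l := r^-1.
have hl : 0 <= l by rewrite invr_ge0 ltW.
have hl2 : l ^+ 2 * q2 n a = 3^-1 by rewrite /l exprVn hr2; field; lra.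
have key : 2 ^+ n * (l * q2 n a) <= \sum_(e <- signs n) `|S n a e|.
  have h1 : \sum_(e <- signs n) (3 * l * S n a e ^+ 2 - l ^+ 3 * S n a e ^+ 4) / 2
            <= \sum_(e <- signs n) `|S n a e|.
    by apply: ler_sum => e _; exact: pt_bound.
  apply: le_trans h1.
  rewrite -mulr_suml big_split /= sumrN -!mulr_sumr M2.
  have := M4 n a. have hl3 : 0 <= l ^+ 3 by rewrite exprn_ge0.
  set A := \sum_(e <- signs n) _.
  move=> hA.
  have : l ^+ 3 * A <= l ^+ 3 * (3 * 2 ^+ n * q2 n a ^+ 2) by rewrite ler_wpM2l.
  have -> : l ^+ 3 * (3 * 2 ^+ n * q2 n a ^+ 2) = 2 ^+ n * (l * q2 n a) * (3 * (l ^+ 2 * q2 n a)) by ring.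
  rewrite hl2 (_ : 3 * 3^-1 = 1 :> R); last by field.
  move=> h; nra.
apply: le_trans (ler_wpM2l hD key).
rewrite mulrCA; apply: ler_wpM2l; first exact: ltW.
have hy : 0 <= Num.sqrt (3 * n%:R) * (l * q2 n a) by rewrite mulr_ge0 ?mulr_ge0.
have hy2 : (Num.sqrt (3 * n%:R) * (l * q2 n a)) ^+ 2 = n%:R * q2 n a.
  rewrite exprMn sqr_sqrtr; last by rewrite mulr_ge0.
  rewrite exprMn (_ : l ^+ 2 * q2 n a ^+ 2 = (l ^+ 2 * q2 n a) * q2 n a); last by ring.
  by rewrite hl2; field.
nra.
Qed.

End Khin.

Section Core.
Variable R : realType.
Variables (N : nat) (t : nat -> (nat -> R) -> R) (u : nat -> nat -> R) (K C : R).
Hypothesis hK : 0 < K.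
Hypothesis hC : 0 < C.
Hypothesis tD : forall i y z, in_l_infty y -> in_l_infty z ->
  t i (fun k => y k + z k) = t i y + t i z.
Hypothesis tZ : forall i r y, in_l_infty y -> t i (fun k => r * y k) = r * t i y.
Hypothesis tB : forall y B, (forall k, `|y k| <= B) -> \sum_(i < N) `|t i y| <= K * B.
Hypothesis hu : forall i k, `|u i k| <= C.
Hypothesis hd : forall i, (i < N)%N -> t i (u i) = 1.

Let dl : R := (2 * K)^-1.
Let dl_gt0 : 0 < dl. Proof. by rewrite invr_gt0 mulr_gt0. Qed.
Let m := (Num.truncn (2 * C / dl)).+1.
Let lev (x : R) : 'I_m := inord (Num.truncn ((x + C) / dl)).
Let rv (j : 'I_m) : R := j%:R * dl - C.
Let V := {ffun 'I_N -> 'I_m}.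
Let w (v : V) (k : nat) : R := if [forall i : 'I_N, lev (u (nat_of_ord i) k) == v i] then 1 else 0.
Let v0 k : V := [ffun i : 'I_N => lev (u (nat_of_ord i) k)].

Let sum_w (c : V -> R) k : \sum_(v : V) c v * w v k = c (v0 k).
Proof.
rewrite (bigD1 (v0 k)); last by []. rewrite {1}/w.
have -> : [forall i, lev (u (nat_of_ord i) k) == v0 k i] by apply/forallP => i; rewrite ffunE.
rewrite mulr1 big1 ?Monoid.mulm1 // => v hv.
rewrite /w; case: ifP; last by rewrite mulr0.
move/forallP => h; exfalso; move/eqP: hv; apply.
by apply/ffunP => i; rewrite ffunE; apply/esym/eqP.
Qed.

Let w_le1 v k : `|w v k| <= 1.
Proof. by rewrite /w; case: ifP; rewrite ?normr1 ?normr0. Qed.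

Let bnd_sum (s : seq V) (c : V -> R) :
  in_l_infty (fun k => \sum_(v <- s) c v * w v k).
Proof.
exists (\sum_(v <- s) `|c v|) => k.
apply: le_trans (ler_norm_sum _ _ _) _.
apply: ler_sum => v _; rewrite normrM -{2}(mulr1 `|c v|).
by apply: ler_wpM2l.
Qed.

Let bnd0 : in_l_infty (fun _ : nat => (0:R)).
Proof. by exists 0 => k; rewrite normr0. Qed.

Let t_sum_seq i (s : seq V) (c : V -> R) :
  t i (fun k => \sum_(v <- s) c v * w v k) = \sum_(v <- s) c v * t i (w v).
Proof.
elim: s => [|x s IH].
  rewrite big_nil.
  have -> : (fun k => \sum_(v <- [::]) c v * w v k) = (fun k => 0 * (fun _ => 0) k).
    by apply: funext => k; rewrite big_nil mul0r.
  by rewrite tZ // mul0r.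
have -> : (fun k => \sum_(v <- x :: s) c v * w v k) =
   (fun k => (fun k => c x * w x k) k + (fun k => \sum_(v <- s) c v * w v k) k).
  by apply: funext => k; rewrite big_cons.
have bw : in_l_infty (w x) by exists 1 => k; exact: w_le1.
rewrite tD ?IH ?big_cons //; last first.
  by case: bw => M hM; exists (`|c x| * M) => k; rewrite normrM ler_wpM2l.
by rewrite tZ.
Qed.

Let t_sum i (c : V -> R) :
  t i (fun k => \sum_(v : V) c v * w v k) = \sum_(v : V) c v * t i (w v).
Proof. exact: t_sum_seq. Qed.

Let lev_approx x : `|x| <= C -> `|x - rv (lev x)| <= dl /\ `|rv (lev x)| <= C.
Proof.
move=> hx; have := hx; rewrite ler_norml => /andP [hx1 hx2].
set z := (x + C) / dl.
have hz : 0 <= z by rewrite /z divr_ge0 //; [lra | exact: ltW].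
have hzle : z <= 2 * C / dl by rewrite /z ler_pM2r ?invr_gt0 ?mulr_gt0 //; lra.
have hlt : (Num.truncn z < m)%N by rewrite ltnS; apply: le_truncn.
rewrite /rv /lev inordK //.
have /andP [h1 h2] := truncn_itv hz.
have e1 : (Num.truncn z)%:R * dl <= x + C.
  by rewrite -ler_pdivlMr //.
have e2 : x + C < ((Num.truncn z)%:R + 1) * dl.
  by rewrite -ltr_pdivrMr // natr1.
have e3 : 0 <= (Num.truncn z)%:R * dl by apply: mulr_ge0 => //; exact: ltW.
split; rewrite ler_norml; apply/andP; split; lra.
Qed.


Let rv_bnd j : `|rv j| <= C.
Proof.
have hC1 : 0 < C := hC. have hK1 : 0 < K := hK.
have hj : (j <= Num.truncn (2 * C / dl))%N by rewrite -ltnS ltn_ord.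
have h0 : 0 <= 2 * C / dl by apply: divr_ge0; [lra | exact: ltW].
have h1 : (j%:R : R) <= 2 * C / dl.
  apply: le_trans (_ : (Num.truncn (2 * C / dl))%:R <= _); first by rewrite ler_nat.
  by rewrite truncn_le.
have h2 : j%:R * dl <= 2 * C by rewrite -ler_pdivlMr.
have h3 : 0 <= (j%:R : R) * dl by apply: mulr_ge0 => //; exact: ltW.
by rewrite /rv ler_norml; apply/andP; split; lra.
Qed.

Theorem core : N%:R <= 12 * C ^+ 2 * K ^+ 2.
Proof.
have hC1 : 0 < C := hC. have hK1 : 0 < K := hK.
have bw : forall v, in_l_infty (w v) by move=> v; exists 1 => k; exact: w_le1.
have Kdl : K * dl = 2^-1 by rewrite /dl invfM mulrCA mulfV ?mulr1 //; lra.
have step1 : forall i : 'I_N, 1 <= C * \sum_(v : V) `|t i (w v)| + K * dl.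
  move=> i.
  pose f := fun k => rv (lev (u i k)).
  pose e := fun k => u i k - f k.
  have hfe : u i = (fun k => f k + e k) by apply: funext => k; rewrite /e; ring.
  have bf : in_l_infty f. exists C => k; rewrite /f; exact: (proj2 (lev_approx _ (hu i k))).
  have be : forall k, `|e k| <= dl by move=> k; rewrite /e /f; exact: (proj1 (lev_approx _ (hu i k))).
  have be' : in_l_infty e by exists dl.
  have hf : f = (fun k => \sum_(v : V) rv (v i) * w v k).
    by apply: funext => k; rewrite sum_w /v0 ffunE.
  have := hd i (ltn_ord i); rewrite hfe tD // hf t_sum => h.
  have h1 : \sum_(v : V) rv (v i) * t i (w v) <= C * \sum_(v : V) `|t i (w v)|.
    apply: le_trans (ler_norm _) _; apply: le_trans (ler_norm_sum _ _ _) _.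
    rewrite mulr_sumr; apply: ler_sum => v _; rewrite normrM.
    by apply: ler_wpM2r => //; exact: rv_bnd.
  have h2 : `|t i e| <= K * dl.
    apply: le_trans _ (tB _ _ be).
    rewrite (bigD1 i) //=; apply: ler_wpDr; first by apply: sumr_ge0.
    exact: lexx.
  have := ler_norm (t i e). lra.
have step2 : N%:R <= C * \sum_(i < N) \sum_(v : V) `|t i (w v)| + N%:R * 2^-1.
  have : \sum_(i < N) (1:R) <= \sum_(i < N) (C * \sum_(v : V) `|t i (w v)| + K * dl).
    by apply: ler_sum => i _; exact: step1.
  rewrite big_split /= -mulr_sumr !sumr_const card_ord Kdl -mulr_natr => h.
  lra.
have sgn : forall e : nat -> R, (forall i, `|e i| <= 1) ->
    \sum_(v : V) `|S R N (fun i => t i (w v)) e| <= K.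
  move=> e he.
  pose X := fun v => S R N (fun i => t i (w v)) e.
  pose s := fun v => if 0 <= X v then 1 else -1 : R.
  have hs : forall v, `|X v| = s v * X v.
    move=> v; rewrite /s; case: ifP => h; first by rewrite mul1r ger0_norm.
    by rewrite mulN1r ltr0_norm // ltNge h.
  pose y := fun k => \sum_(v : V) s v * w v k.
  have hy : forall k, `|y k| <= 1.
    by move=> k; rewrite /y sum_w /s; case: ifP; rewrite ?normrN normr1.
  have hty : forall i, t i y = \sum_(v : V) s v * t i (w v) by move=> i; exact: t_sum.
  have -> : \sum_(v : V) `|S R N (fun i => t i (w v)) e| = \sum_(i < N) e i * t i y.
    rewrite (eq_bigr (fun v => s v * X v)); last by move=> v _; exact: hs.
    rewrite /X /S.
    rewrite (eq_bigr (fun v => \sum_(i < N) s v * (e i * t i (w v)))); last first.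
      by move=> v _; rewrite mulr_sumr.
    rewrite exchange_big /=; apply: eq_bigr => i _.
    by rewrite hty mulr_sumr; apply: eq_bigr => v _; ring.
  apply: le_trans (_ : \sum_(i < N) `|t i y| <= _); last first.
    by apply: le_trans (tB _ _ hy) _; rewrite mulr1.
  apply: ler_sum => i _; apply: le_trans (ler_norm _) _.
  rewrite normrM -{2}(mul1r `|t i y|); apply: ler_wpM2r => //.
have step4 : \sum_(i < N) \sum_(v : V) `|t i (w v)| <= Num.sqrt (3 * N%:R) * K.
  rewrite exchange_big /=.
  have hP : 0 < (2:R) ^+ N by rewrite exprn_gt0.
  rewrite -(ler_pM2l hP) mulr_sumr.
  apply: le_trans (_ : \sum_(v : V) Num.sqrt (3 * N%:R) *
      \sum_(e <- signs R N) `|S R N (fun i => t i (w v)) e| <= _).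
    by apply: ler_sum => v _; exact: (khin R N (fun i => t i (w v))).
  rewrite -mulr_sumr exchange_big /= mulrCA; apply: ler_wpM2l; first exact: sqrtr_ge0.
  exact: (sum_signs_le R N).
have hD := sqrtr_ge0 (3 * N%:R : R).
have hD2 : Num.sqrt (3 * N%:R) ^+ 2 = 3 * N%:R :> R by rewrite sqr_sqrtr // mulr_ge0.
move: step2 step4 hD hD2.
set P := \sum_(i < N) _. set D := Num.sqrt _. move=> s2 s4 hD hD2.
have hN : 0 <= (N%:R : R) by [].
have : N%:R <= 2 * C * D * K.
  have : C * P <= C * (D * K) by rewrite ler_pM2l.
  lra.
move=> h.
have h' : (N%:R : R) ^+ 2 <= (2 * C * D * K) ^+ 2 by rewrite lerXn2r // ?nnegrE //; apply: le_trans h.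
rewrite !exprMn hD2 in h'.
nra.
Qed.

End Core.

Set Implicit Arguments. Unset Strict Implicit.
Local Open Scope classical_set_scope.

Section Glue.
Variable R : realType.

Lemma ces_avg_ge0 (a : nat -> R) n : 0 <= ces_avg a n.
Proof. by apply: mulr_ge0; [rewrite invr_ge0 | apply: sumr_ge0]. Qed.

Lemma ces_add (a b : nat -> R) : in_ces_infty a -> in_ces_infty b ->
  in_ces_infty (fun n => a n + b n).
Proof.
move=> [Ma ha] [Mb hb]; exists (Ma + Mb) => n.
apply: le_trans (lerD (ha n) (hb n)).
rewrite /ces_avg -mulrDr; apply: ler_wpM2l; first by rewrite invr_ge0.
rewrite -big_split /=; apply: ler_sum => k _; exact: ler_normD.
Qed.

Lemma ces_scale (r : R) (a : nat -> R) : in_ces_infty a -> in_ces_infty (fun n => r * a n).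
Proof.
move=> [M h]; exists (`|r| * M) => n.
have -> : ces_avg (fun n => r * a n) n = `|r| * ces_avg a n.
  rewrite /ces_avg [RHS]mulrCA; congr (_ * _); rewrite mulr_sumr; apply: eq_bigr => k _; exact: normrM.
by apply: ler_wpM2l.
Qed.

Lemma linf_add (a b : nat -> R) : in_l_infty a -> in_l_infty b -> in_l_infty (fun n => a n + b n).
Proof.
move=> [Ma ha] [Mb hb]; exists (Ma + Mb) => n.
by apply: le_trans (ler_normD _ _) (lerD (ha n) (hb n)).
Qed.

Lemma linf_scale (r : R) (a : nat -> R) : in_l_infty a -> in_l_infty (fun n => r * a n).
Proof.
by move=> [M h]; exists (`|r| * M) => n; rewrite normrM ler_wpM2l.
Qed.

Lemma ces_norm_ub (a : nat -> R) n : in_ces_infty a -> ces_avg a n <= ces_norm a.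
Proof.
move=> [M h]; have hub : has_ubound (range (ces_avg a)).
  by exists M => _ [k _ <-].
by apply: (ub_le_sup hub); exists n.
Qed.

Lemma ces_norm_le (a : nat -> R) B : (forall n, ces_avg a n <= B) -> ces_norm a <= B.
Proof.
move=> h; apply: ge_sup; first by exists (ces_avg a 0), 0.
by move=> _ [k _ <-].
Qed.

Lemma linf_norm_ub (a : nat -> R) n : in_l_infty a -> `|a n| <= linf_norm a.
Proof.
move=> [M h]; have hub : has_ubound (range (fun n => `|a n|)).
  by exists M => _ [k _ <-].
by apply: (ub_le_sup hub); exists n.
Qed.

Lemma linf_norm_le (a : nat -> R) B : (forall n, `|a n| <= B) -> linf_norm a <= B.
Proof.
move=> h; apply: ge_sup; first by exists `|a 0|, 0.
by move=> _ [k _ <-].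
Qed.

Lemma sum_delta n j : \sum_(k < n) (if (k : nat) == j then 1 else 0 : R) = (if (j < n)%N then 1 else 0).
Proof.
elim: n => [|n IH]; first by rewrite big_ord0.
rewrite big_ord_recr /= IH.
case: (ltngtP j n) => h.
- by rewrite (ltnW h : (j < n.+1)%N) addr0.
- by rewrite addr0 ltnNge h.
- by rewrite h ltnSn add0r.
Qed.

End Glue.

Theorem corollary4 (R : realType) :
  ~ exists T : (nat -> R) -> (nat -> R), ces_linf_isomorphism T.
Proof.
move=> [T [hmap [hadd [hmul [hinj [hsurj [c [C0 [hc [hC0 hnorm]]]]]]]]]].
have hc1 : 0 < c := hc. have hC1 : 0 < C0 := hC0.
have : forall y : nat -> R, exists a, in_l_infty y -> in_ces_infty a /\ T a = y.
  move=> y; case: (pselect (in_l_infty y)) => h.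
    by have [a ha e] := hsurj y h; exists a.
  by exists y.
case/choice => Ti hTi.
have TiD : forall y z, in_l_infty y -> in_l_infty z ->
    Ti (fun k => y k + z k) = (fun k => Ti y k + Ti z k).
  move=> y z hy hz.
  have [h1 e1] := hTi y hy. have [h2 e2] := hTi z hz.
  have [h3 e3] := hTi _ (linf_add hy hz).
  apply: hinj => //; first exact: ces_add.
  by rewrite e3 hadd // e1 e2.
have TiZ : forall r y, in_l_infty y -> Ti (fun k => r * y k) = (fun k => r * Ti y k).
  move=> r y hy.
  have [h1 e1] := hTi y hy.
  have [h3 e3] := hTi _ (linf_scale r hy).
  apply: hinj => //; first exact: ces_scale.
  by rewrite e3 hmul // e1.
set K0 := 2 / c.
have hK0 : 0 < K0 by rewrite /K0 divr_gt0.
set n := Num.truncn (12 * C0 ^+ 2 * K0 ^+ 2).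
set N := n.+1.
have hN : (0 < N)%N by [].
have hNr : (N%:R : R) != 0 by rewrite pnatr_eq0.
pose t := fun (i : nat) (y : nat -> R) => Ti y (N + i)%N / N%:R.
pose x := fun (i : nat) (k : nat) => if k == (N + i)%N then (N%:R : R) else 0.
have xavg : forall i j, ces_avg (x i) j <= 1.
  move=> i j; rewrite /ces_avg.
  have -> : \sum_(k < j.+1) `|x i k| = N%:R * (if (N + i < j.+1)%N then 1 else 0).
    rewrite -sum_delta mulr_sumr; apply: eq_bigr => k _.
    by rewrite /x; case: ifP; rewrite ?normr0 ?mulr0 ?mulr1 // normr_nat.
  case: ifP => h; last by rewrite mulr0 mulr0.
  rewrite mulr1 ler_pdivrMl ?ltr0Sn // mulr1 ler_nat.
  by apply: leq_trans (ltnW h); rewrite leq_addr.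
have xces : forall i, in_ces_infty (x i) by move=> i; exists 1.
have u_bnd : forall i k, `|T (x i) k| <= C0.
  move=> i k.
  apply: le_trans (linf_norm_ub k (hmap _ (xces i))) _.
  apply: le_trans (proj2 (hnorm _ (xces i))) _.
  rewrite -{2}(mulr1 C0); apply: ler_wpM2l; first exact: ltW.
  exact: ces_norm_le.
have := @core R N t (fun i => T (x i)) K0 C0 hK0 hC0.
have tD : forall i y z, in_l_infty y -> in_l_infty z ->
    t i (fun k => y k + z k) = t i y + t i z.
  by move=> i y z hy hz; rewrite /t TiD // mulrDl.
have tZ : forall i r y, in_l_infty y -> t i (fun k => r * y k) = r * t i y.
  by move=> i r y hy; rewrite /t TiZ // mulrA.
have tB : forall y B, (forall k, `|y k| <= B) -> \sum_(i < N) `|t i y| <= K0 * B.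
  move=> y B hy.
  have yb : in_l_infty y by exists B.
  have [ha hTa] := hTi y yb.
  move: ha hTa; set a := Ti y => ha hTa.
  have h1 : \sum_(i < N) `|t i y| = N%:R^-1 * \sum_(i < N) `|a (N + i)%N|.
    rewrite mulr_sumr; apply: eq_bigr => i _.
    by rewrite /t normrM normfV normr_nat mulrC.
  have h2 : \sum_(i < N) `|a (N + i)%N| <= \sum_(k < N + N) `|a k|.
    rewrite big_split_ord /=; apply: ler_wpDl; first exact: sumr_ge0.
    exact: lexx.
  have h3 : \sum_(k < N + N) `|a k| = (N + N)%:R * ces_avg a (N + n).
    rewrite /ces_avg -addnS mulrA mulfV ?mul1r //.
    by rewrite pnatr_eq0 addn_eq0.
  have h4 : ces_avg a (N + n) <= B / c.
    apply: le_trans (ces_norm_ub _ ha) _.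
    rewrite ler_pdivlMr // mulrC.
    apply: le_trans (proj1 (hnorm _ ha)) _.
    by rewrite hTa; apply: linf_norm_le.
  rewrite h1.
  apply: le_trans (_ : N%:R^-1 * ((N + N)%:R * ces_avg a (N + n)) <= _).
    by rewrite -h3; apply: ler_wpM2l; [rewrite invr_ge0 | exact: h2].
  rewrite natrD mulrA (_ : N%:R^-1 * (N%:R + N%:R) = 2 :> R); last by field.
  have -> : K0 * B = 2 * (B / c) by rewrite /K0; field; lra.
  by apply: ler_wpM2l.
have hd : forall i, (i < N)%N -> t i (T (x i)) = 1.
  move=> i _.
  have hb : in_l_infty (T (x i)) := hmap _ (xces i).
  have [h1 e1] := hTi _ hb.
  rewrite /t (hinj _ _ h1 (xces i) e1).
  by rewrite /x eqxx mulfV.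
move=> /(_ tD tZ tB u_bnd hd).
have := truncnS_gt (12 * C0 ^+ 2 * K0 ^+ 2).
rewrite -/n -/N; lra.
Qed.
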